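(* Let $r\ge0$ and let $P$ be a finite nonempty subset of $\mathbb{R}$ with $m=\min(P)$. Then \[\mathrm{AR}_r(P)\simeq\bigvee_{p\in P,\ m<p\le m+r}\mathrm{susp}\bigl(\mathrm{AR}_r(\{q\in P\mid q>p+r\})\bigr).\]
   Context: For a subset $P$ of a metric space with metric $d$ and $r\ge0$, the anti-Rips complex $\mathrm{AR}_r(P)$ is the simplicial complex with vertex set $P$ whose simplices are the finite subsets of $P$ in which any two distinct points $p,q$ satisfy $d(p,q)>r$; on $\mathbb{R}$, $d(p,q)=|p-q|$. $\mathrm{AR}_r(\emptyset)$ is the empty complex, $\mathrm{susp}(\emptyset)=S^0$, and a wedge over an empty index set is a point. *)

(* Defs.v *)
From HB Require Import structures.
From mathcomp Require Import all_boot all_order all_algebra finmap.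
From mathcomp Require Import all_classical all_reals all_analysis.
Set Implicit Arguments. Unset Strict Implicit. Unset Printing Implicit Defensive.
Import Order.TTheory GRing.Theory Num.Theory.
Import numFieldNormedType.Exports.
Local Open Scope classical_set_scope.
Local Open Scope ring_scope.

Definition complex (V : choiceType) := {fset V} -> Prop.

Definition AR {R : realType} (r : R) (P : {fset R}) : complex R :=
  fun s => (s `<=` P)%fset /\
    (forall p q, p \in s -> q \in s -> p != q -> r < `|p - q|).

(* simplicial suspension: two cone vertices inr true (north), inr false (south).
   susp (empty complex) = S^0. *)
Definition susp {V : choiceType} (K : complex V) : complex ((V + bool)%type) :=
  fun t => exists s (c : {fset (V + bool)%type}), K s /\
    (c = fset0%fset \/ c = [fset inr true]%fset \/ c = [fset inr false]%fset) /\
    t = ([fset (inl x : (V + bool)%type) | x in s]%fset `|` c)%fset.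

(* wedge of the complexes K i (i in J), all glued at the common vertex b;
   the glued vertex is None.  Over an empty index set it is a point. *)
Definition wedge {I V : choiceType} (J : {fset I}) (b : V) (K : I -> complex V)
  : complex (option (I * V)) :=
  fun t => (t `<=` [fset None]%fset)%fset \/
    exists i s, i \in J /\ K i s /\
      t = [fset (if v == b then None else Some (i, v)) | v in s]%fset.

Definition realization {R : realType} {V : choiceType} (K : complex V)
  : set {ptws V -> R} :=
  [set t | exists s : {fset V}, K s /\ (forall v, v \notin s -> t v = 0) /\
     (forall v, 0 <= t v) /\ \sum_(v <- s) t v = 1].

Definition homotopic {R : realType} {X Y : topologicalType} (A : set X) (B : set Y)
  (f g : X -> Y) : Prop :=
  exists H : (X * R)%type -> Y,
    {within A `*` [set s : R | 0 <= s <= 1], continuous H} /\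
    (forall x s, A x -> 0 <= s <= 1 -> B (H (x, s))) /\
    (forall x, A x -> H (x, 0) = f x /\ H (x, 1) = g x).

Definition homotopy_equiv (R : realType) {X Y : topologicalType} (A : set X) (B : set Y)
  : Prop :=
  exists (f : X -> Y) (g : Y -> X),
    {within A, continuous f} /\ {within B, continuous g} /\
    (forall x, A x -> B (f x)) /\ (forall y, B y -> A (g y)) /\
    @homotopic R _ _ A A (g \o f) id /\ @homotopic R _ _ B B (f \o g) id.

(* Main.v *)
Require Import Defs.
From HB Require Import structures.
From mathcomp Require Import all_boot all_order all_algebra finmap.
From mathcomp Require Import all_classical all_reals all_analysis.
From mathcomp Require Import ring lra.
Import Order.TTheory GRing.Theory Num.Theory.
Import numFieldNormedType.Exports.
Local Open Scope classical_set_scope.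
Local Open Scope ring_scope.


Section Ct.
Context {R : realType} {T : topologicalType}.
Definition ct (f : T -> R) := continuous f.

Lemma ct_cst c : ct (fun _ => c).
Proof. by move=> x; apply: cvg_cst. Qed.
Lemma ct_add f g : ct f -> ct g -> ct (fun x => f x + g x).
Proof. by move=> hf hg x; apply: cvgD; [apply: hf|apply: hg]. Qed.
Lemma ct_mul f g : ct f -> ct g -> ct (fun x => f x * g x).
Proof. by move=> hf hg x; apply: cvgM; [apply: hf|apply: hg]. Qed.
Lemma ct_opp f : ct f -> ct (fun x => - f x).
Proof. by move=> hf x; apply: cvgN; apply: hf. Qed.
Lemma ct_max f g : ct f -> ct g -> ct (fun x => Num.max (f x) (g x)).
Proof. by move=> hf hg x; apply: (@continuous_max R T f g x); [apply: hf|apply: hg]. Qed.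
Lemma ct_min f g : ct f -> ct g -> ct (fun x => Num.min (f x) (g x)).
Proof. by move=> hf hg x; apply: (@continuous_min R T f g x); [apply: hf|apply: hg]. Qed.
Lemma ct_inv f : ct f -> (forall x, f x != 0) -> ct (fun x => (f x)^-1).
Proof. by move=> hf h0 x; apply: cvgV; [apply: h0|apply: hf]. Qed.
Lemma ct_sum (I : Type) (s : seq I) (F : I -> T -> R) :
  (forall i, ct (F i)) -> ct (fun x => \sum_(i <- s) F i x).
Proof.
move=> h; elim: s => [|i s IH].
  by under eq_fun do rewrite big_nil; apply: ct_cst.
by under eq_fun do rewrite big_cons; apply: ct_add.
Qed.
End Ct.

Lemma ct_proj {R : realType} {U : eqType} (u : U) : ct (fun t : {ptws U -> R} => t u).
Proof. exact: (@proj_continuous U (fun _ => R) u). Qed.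

Lemma ct_ptws {R : realType} {T : topologicalType} {U : eqType} (F : T -> {ptws U -> R}) :
  (forall u, ct (fun x => F x u)) -> continuous F.
Proof.
move=> h x; apply/cvg_sup => u.
move=> A /= [_ [[B Bop <-] Bfs sBfA]].
have hB : nbhs (F x u) B by rewrite nbhsE; exists B.
have := h u x B hB; rewrite nbhs_simpl /= => hB'.
by apply: filterS hB' => y /= By; apply: sBfA.
Qed.

Lemma ct_fst {R : realType} {T S : topologicalType} (f : T -> R) : ct f -> ct (fun p : T * S => f p.1).
Proof. move=> h x; apply: continuous_comp; [exact: cvg_fst| exact: h]. Qed.
Lemma ct_snd {R : realType} {T S : topologicalType} (f : S -> R) : ct f -> ct (fun p : T * S => f p.2).
Proof. move=> h x; apply: continuous_comp; [exact: cvg_snd| exact: h]. Qed.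
Lemma ct_id {R : realType} : ct (fun x : R => x).
Proof. by move=> x. Qed.


Section Arith.
Context {R : realType}.
Implicit Types b s : R.
Definition th b : R := Num.max (2*b-1) (- ((1-2*b)*(1-2*b))).
Definition hh b s : R := (1-s) * th b + s * b.
Definition rho b s : R :=
  (1 - Num.max (hh (Num.min b (2^-1)) s) (- hh (Num.min b (2^-1)) s)) /
  (1 - Num.min b (2^-1)).
Definition phi b : R := 2 * Num.min (2 * b) 1.

Lemma th_lo b : 0 <= b <= 2^-1 -> th b = - ((1-2*b)*(1-2*b)).
Proof. move=> /andP[h1 h2]; rewrite /th; apply/max_idPr; nra. Qed.
Lemma th_hi b : 2^-1 <= b -> th b = 2*b-1.
Proof. move=> h; rewrite /th; apply/max_idPl; nra. Qed.
Lemma th0 : th 0 = -1.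
Proof. rewrite th_lo; [lra|]. apply/andP; split; lra. Qed.
Lemma hh0 s : hh 0 s = -(1-s).
Proof. by rewrite /hh th0; lra. Qed.
Lemma hhs0 b : hh b 0 = th b.
Proof. by rewrite /hh; lra. Qed.
Lemma hhs1 b : hh b 1 = b.
Proof. by rewrite /hh; lra. Qed.
Lemma absE (x : R) : Num.max x (-x) = `|x|.
Proof. by case: (lerP 0 x) => h; [rewrite ger0_norm //; apply/max_idPl; lra | rewrite ltr0_norm //; apply/max_idPr; lra]. Qed.

Lemma rho_lo b s : b <= 2^-1 -> rho b s = (1 - `|hh b s|) / (1 - b).
Proof. by move=> h; rewrite /rho absE (min_idPl h). Qed.
Lemma rho_hi b s : 0 <= s -> 2^-1 <= b -> rho b s = 2 - s.
Proof.
move=> hs h; rewrite /rho absE (min_idPr h) /hh th_hi ?lexx //.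
rewrite ger0_norm; last by lra.
apply: (@mulIf _ (1 - 2^-1)); first lra.
rewrite mulfVK; last lra. lra.
Qed.
Lemma rho0 s : 0 <= s <= 1 -> rho 0 s = s.
Proof.
move=> /andP[h1 h2]; rewrite rho_lo; last lra.
rewrite hh0 ler0_norm; last lra. rewrite subr0 divr1; lra.
Qed.
Lemma rhob0 b : 0 <= b -> rho b 0 = phi b.
Proof.
move=> hb; rewrite /phi; case: (lerP b (2^-1)) => h.
  rewrite rho_lo // hhs0 th_lo; last by apply/andP.
  rewrite ler0_norm; last nra.
  rewrite (min_idPl _); last lra.
  apply: (@mulIf _ (1 - b)); first lra.
  rewrite mulfVK; last lra. nra.
rewrite rho_hi ?lexx; [|lra|lra]. rewrite (min_idPr _); lra.
Qed.
Lemma rhob1 b : 0 <= b <= 1 -> rho b 1 = 1.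
Proof.
move=> /andP[h1 h2]; case: (lerP b (2^-1)) => h.
  rewrite rho_lo // hhs1 ger0_norm //. rewrite divff //; lra.
rewrite rho_hi; lra.
Qed.
Lemma hh_bnd b s : 0 <= b <= 1 -> 0 <= s <= 1 -> `|hh b s| <= 1.
Proof.
move=> /andP[h1 h2] /andP[h3 h4]; rewrite ler_norml /hh.
case: (lerP b (2^-1)) => h.
  rewrite th_lo; last by apply/andP. apply/andP; split; nra.
rewrite th_hi; last lra. apply/andP; split; nra.
Qed.
Lemma rho_ge0 b s : 0 <= b <= 1 -> 0 <= s <= 1 -> 0 <= rho b s.
Proof.
move=> hb hs; case: (lerP b (2^-1)) => h.
  rewrite rho_lo //; apply: divr_ge0.
    by have := @hh_bnd b s hb hs; lra.
  by case/andP: hb => *; lra.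
by rewrite rho_hi; case/andP: hs => *; lra.
Qed.
Lemma rho_id b s : 0 <= b <= 1 -> 0 <= s <= 1 -> rho b s * (1 - b) = 1 - `|hh b s|.
Proof.
move=> hb hs; case/andP: (hb) => h1 h2; case/andP: (hs) => h3 h4.
case: (lerP b (2^-1)) => h.
  by rewrite rho_lo // mulfVK //; lra.
rewrite rho_hi //; last lra.
rewrite /hh th_hi; last lra.
rewrite ger0_norm; nra.
Qed.
Lemma hh_hi_ge0 b s : 2^-1 <= b -> 0 <= s <= 1 -> 0 <= hh b s.
Proof. move=> h /andP[h3 h4]; rewrite /hh th_hi //; nra. Qed.
Lemma phi0 : phi 0 = 0.
Proof. by rewrite /phi mulr0 (min_idPl _) ?mulr0 //; lra. Qed.
Lemma th_max0 b : Num.max (th b) 0 = Num.max (2*b-1) 0.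
Proof.
rewrite /th; have hn : - ((1-2*b)*(1-2*b)) <= 0 by have := sqr_ge0 (1-2*b); rewrite expr2; lra.
case: (lerP 0 (2*b-1)) => h.
  have h2 : - ((1-2*b)*(1-2*b)) <= 2*b-1 by lra.
  rewrite [Num.max (2*b-1) (- _)](max_idPl h2).
  by rewrite (max_idPl h).
have h0 : 2*b-1 <= 0 by lra.
apply/max_idPr.
by rewrite ge_max; apply/andP; split; lra.
Qed.
End Arith.


Lemma sum_ge0_fs {V : choiceType} {R : realType} (S : {fset V}) (t : V -> R) :
  (forall v, 0 <= t v) -> 0 <= \sum_(v <- S) t v.
Proof. by move=> h; apply: sumr_ge0 => v _. Qed.

Lemma sum_split {V : choiceType} {R : realType} (S : {fset V}) (t : V -> R) c :
  (forall v, v \notin S -> t v = 0) ->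
  \sum_(v <- S) t v = t c + \sum_(v <- (S `\ c)%fset) t v.
Proof.
move=> tz; case: (boolP (c \in S)) => hc; first by rewrite (big_fsetD1 c).
by rewrite tz // add0r mem_fsetD1.
Qed.

Lemma le1_of_sum {V : choiceType} {R : realType} (S : {fset V}) (t : V -> R) v :
  (forall v, 0 <= t v) -> \sum_(v <- S) t v = 1 -> v \in S -> t v <= 1.
Proof.
move=> h0 h1 hv; move: h1; rewrite (big_fsetD1 v) //= => h1.
have := @sum_ge0_fs _ _ (S `\ v)%fset t h0. lra.
Qed.

Lemma eq_fsum {V : choiceType} {R : realType} (S : {fset V}) (f g : V -> R) :
  (forall v, v \in S -> f v = g v) -> \sum_(v <- S) f v = \sum_(v <- S) g v.
Proof.
move=> h; rewrite big_seq_cond [RHS]big_seq_cond; apply: eq_bigr => v /andP[vS _].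
exact: h.
Qed.

Section Gen.
Context {R : realType} {V : choiceType} (c0 : V) (A : {fset V}).

Definition Bs (t : V -> R) := \sum_(a <- A) t a.
Definition Hg (t : V -> R) (s : R) : V -> R := fun v =>
  if v == c0 then Num.max (- hh (Bs t) s) 0 + s * t c0
  else if v \in A then Num.max (hh (t v) s) 0 else rho (Bs t) s * t v.

Lemma ct_th {T : topologicalType} (f : T -> R) : ct f -> ct (fun x => th (f x)).
Proof.
move=> h; rewrite /th; apply: ct_max.
  by apply: ct_add; [apply: ct_mul; [apply: ct_cst|]|apply: ct_cst].
apply: ct_opp; apply: ct_mul; apply: ct_add; try apply: ct_cst;
  apply: ct_opp; apply: ct_mul => //; apply: ct_cst.
Qed.
Lemma ct_hh {T : topologicalType} (f g : T -> R) : ct f -> ct g -> ct (fun x => hh (f x) (g x)).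
Proof.
move=> hf hg; rewrite /hh; apply: ct_add; apply: ct_mul => //.
  by apply: ct_add; [apply: ct_cst| apply: ct_opp].
exact: ct_th.
Qed.
Lemma ct_rho {T : topologicalType} (f g : T -> R) : ct f -> ct g -> ct (fun x => rho (f x) (g x)).
Proof.
move=> hf hg; rewrite /rho.
have hm : ct (fun x => Num.min (f x) (2^-1)) by apply: ct_min => //; apply: ct_cst.
apply: ct_mul.
  apply: ct_add; first exact: ct_cst.
  by apply: ct_opp; apply: ct_max; [|apply: ct_opp]; apply: ct_hh.
apply: ct_inv; first by apply: ct_add; [apply: ct_cst|apply: ct_opp].
move=> x; have : Num.min (f x) (2^-1) <= 2^-1 by rewrite ge_min lexx orbT.
move=> h; apply/eqP => h'; lra.
Qed.

Lemma ct_p1 (v : V) : ct (fun p : {ptws V -> R} * R => p.1 v).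
Proof. exact: (@ct_fst R {ptws V -> R} R (fun t => t v) (ct_proj v)). Qed.
Lemma ct_p2 : ct (fun p : {ptws V -> R} * R => p.2).
Proof. exact: (@ct_snd R {ptws V -> R} R (fun t => t) ct_id). Qed.

Lemma ct_Bs : ct (fun p : {ptws V -> R} * R => Bs p.1).
Proof.
have h := @ct_sum R ({ptws V -> R} * R)%type V A (fun a p => p.1 a).
rewrite /Bs; apply: h => a; exact: ct_p1. Qed.

Lemma Hg_cont : continuous (fun p : {ptws V -> R} * R => (Hg p.1 p.2 : {ptws V -> R})).
Proof.
apply: ct_ptws => v; rewrite /Hg.
have hs := ct_p2.
case: (v == c0).
  apply: ct_add; last by apply: ct_mul => //; exact: ct_p1.
  by apply: ct_max; [apply: ct_opp; apply: ct_hh => //; exact: ct_Bs|apply: ct_cst].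
case: (v \in A).
  apply: ct_max; [apply: ct_hh => //; exact: ct_p1|apply: ct_cst].
apply: ct_mul; [apply: ct_rho => //; exact: ct_Bs|exact: ct_p1].
Qed.

End Gen.

Section Gen2.
Context {R : realType} {V : choiceType} (F : complex V) (c0 : V) (A : {fset V}).
Hypothesis c0A : c0 \notin A.
Hypothesis HA1 : forall s, F s -> forall a a', a \in A -> a' \in A -> a \in s -> a' \in s -> a = a'.
Hypothesis HA2 : forall s, F s -> forall a, a \in A -> a \in s -> c0 \notin s.
Hypothesis HC0 : forall s, F s -> (forall a, a \in A -> a \notin s) -> F (c0 |` s)%fset.
Hypothesis HCa : forall s, F s -> forall a, a \in A -> a \in s -> F (c0 |` (s `\ a))%fset.

Lemma real_cases (t : V -> R) : realization (R:=R) F t ->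
  exists S, [/\ F S, (forall v, v \notin S -> t v = 0), (forall v, 0 <= t v),
    \sum_(v <- S) t v = 1 &
    ((forall a, a \in A -> a \notin S) /\ Bs A t = 0 \/
     exists a, [/\ a \in A, a \in S, t c0 = 0, Bs A t = t a &
                  forall v, v \in S -> v != a -> v != c0 /\ v \notin A])].
Proof.
case=> S [FS [tz [t0 t1]]]; exists S; split => //.
case: (pselect (exists a, a \in A /\ a \in S)) => [[a [aA aS]]|noA].
  right; exists a; split => //.
  - apply: tz; exact: (HA2 _ FS _ aA aS).
  - rewrite /Bs (big_fsetD1 a) //= big1_fset ?addr0 // => v /fsetD1P[va vA] _.
    apply: tz; apply/negP => vS; move/eqP: va; apply; exact: (HA1 _ FS _ _ vA aA vS aS).
  - move=> v vS va; split.
      by apply/eqP => vc; move: (HA2 _ FS _ aA aS); rewrite -vc vS.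
    by apply/negP => vA; move/eqP: va; apply; exact: (HA1 _ FS _ _ vA aA vS aS).
left; have h : forall a, a \in A -> a \notin S.
  by move=> a aA; apply/negP => aS; apply: noA; exists a.
split => //; rewrite /Bs big1_fset // => a aA _; apply: tz; exact: h.
Qed.

Lemma Bs_bnd (t : V -> R) : realization (R:=R) F t -> 0 <= Bs A t <= 1.
Proof.
move=> /real_cases [S [_ _ t0 t1 [[_ ->]|[a [_ aS _ -> _]]]]]; first by rewrite lexx ler01.
by rewrite t0 (le1_of_sum _ _ _ t0 t1 aS).
Qed.

Lemma Hg_ge0 (t : V -> R) s : (forall v, 0 <= t v) -> 0 <= Bs A t <= 1 -> 0 <= s <= 1 ->
  forall v, 0 <= Hg c0 A t s v.
Proof.
move=> t0 hB hs v; rewrite /Hg; case: (v == c0).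
  by apply: addr_ge0; [rewrite le_max lexx orbT|apply: mulr_ge0; [case/andP: hs|]].
case: (v \in A); first by rewrite le_max lexx orbT.
by apply: mulr_ge0 => //; apply: rho_ge0.
Qed.

Lemma Hg1 (t : V -> R) : realization (R:=R) F t -> Hg c0 A t 1 = t.
Proof.
move=> rt; have [h0 h1] := andP (Bs_bnd t rt).
case: rt => S [FS [tz [t0 t1]]].
apply: funext => v; rewrite /Hg hhs1 rhob1 ?h0 ?h1 // mul1r hhs1.
case: eqP => [->|_].
  by rewrite (max_idPr _) ?add0r //; lra.
by case: (v \in A); [apply/max_idPl|rewrite mul1r].
Qed.


Lemma Hg_real (t : V -> R) s : realization (R:=R) F t -> 0 <= s <= 1 ->
  realization (R:=R) F (Hg c0 A t s).
Proof.
move=> rt hs; have hB := Bs_bnd t rt.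
have [S [FS tz t0 t1 cas]] := real_cases t rt.
have hge := Hg_ge0 t s t0 hB hs.
case/andP: (hs) => s0 s1.
have zA : forall v, v \notin S -> v != c0 -> Hg c0 A t s v = 0.
  move=> v vS vc; rewrite /Hg (negbTE vc) tz //.
  case: (v \in A); last by rewrite mulr0.
  by rewrite hh0; apply/max_idPr; lra.
case: cas => [[nA B0]|[a [aA aS tc0 Ba hS]]].
  exists (c0 |` S)%fset; split; first exact: HC0 FS nA.
  split.
    move=> v; rewrite in_fset1U negb_or => /andP[vc vS]; exact: zA.
  split => //.
  rewrite (big_fsetD1 c0) ?fsetU11 //=.
  have -> : ((c0 |` S) `\ c0)%fset = (S `\ c0)%fset.
    by apply/fsetP => v; rewrite !inE; case: eqP.
  rewrite (@eq_fsum _ _ _ _ (fun v => s * t v)); last first.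
    move=> v /fsetD1P[vc vS]; rewrite /Hg (negbTE vc).
    have -> : (v \in A) = false by apply/negP => vA; move: (nA v vA); rewrite vS.
    by rewrite B0 rho0.
  rewrite -mulr_sumr /Hg eqxx B0 hh0.
  move: t1; rewrite (sum_split _ _ c0 tz) => t1.
  have -> : \sum_(v <- (S `\ c0)%fset) t v = 1 - t c0 by lra.
  rewrite (max_idPl _); [ring|lra].
have ac : a != c0 by apply/eqP => e; move: c0A; rewrite -e aA.
have c0S : c0 \notin S := HA2 _ FS _ aA aS.
have hb : 0 <= t a <= 1 by rewrite t0 (le1_of_sum _ _ _ t0 t1 aS).
have sr : \sum_(v <- (S `\ a)%fset) t v = 1 - t a.
  by move: t1; rewrite (big_fsetD1 a) //=; lra.
have hrest : \sum_(v <- (S `\ a)%fset) Hg c0 A t s v = rho (t a) s * (1 - t a).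
  rewrite -sr mulr_sumr; apply: eq_fsum => v /fsetD1P[va vS].
  have [vc vA] := hS v vS va.
  by rewrite /Hg (negbTE vc) (negbTE vA) Ba.
have rid := rho_id _ _ hb hs.
have Hgc0 : Hg c0 A t s c0 = Num.max (- hh (t a) s) 0.
  by rewrite /Hg eqxx Ba tc0 mulr0 addr0.
have Hga : Hg c0 A t s a = Num.max (hh (t a) s) 0.
  by rewrite /Hg (negbTE ac) aA.
case: (lerP 0 (hh (t a) s)) => hp.
  exists S; split => //; split.
    move=> v vS; case: (eqVneq v c0) => [->|vc]; last exact: zA.
    by rewrite Hgc0; apply/max_idPr; lra.
  split => //.
  rewrite (big_fsetD1 a) //= hrest rid Hga (max_idPl hp) ger0_norm //; ring.
exists (c0 |` (S `\ a))%fset; split; first exact: HCa _ FS _ aA aS.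
split.
  move=> v; rewrite in_fset1U negb_or => /andP[vc]; rewrite in_fsetD1 negb_and negbK.
  case: (eqVneq v a) => [->|va] /= vS; last exact: zA.
  by rewrite Hga; apply/max_idPr; lra.
split => //.
have c0Sa : c0 \notin (S `\ a)%fset by rewrite in_fsetD1 negb_and c0S orbT.
rewrite big_fsetU1 //= hrest rid Hgc0 (max_idPl _); last lra.
rewrite ltr0_norm //; ring.
Qed.
End Gen2.


Lemma neqF (T : eqType) (x y : T) : x <> y -> (x == y) = false.
Proof. by move/eqP/negbTE. Qed.

Section Inst.
Context {R : realType} (r : R) (P : {fset R}) (m : R).
Hypotheses (r0 : 0 <= r) (mP : m \in P) (mmin : forall p, p \in P -> m <= p).

Definition J := [fset p in P | (m < p <= m + r)%R]%fset.
Definition Q (p : R) := [fset q in P | (p + r < q)%R]%fset.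
Definition VW := option (R * (R + bool))%type.
Definition KC : complex R := AR r P.
Definition WC : complex VW := wedge J (inr true) (fun p => susp (AR r (Q p))).
Definition AW : {fset VW} := [fset (Some (p, inr false) : VW) | p in J]%fset.
Definition cset (p : R) (k : option bool) : {fset VW} :=
  match k with None => fset0 | Some true => [fset None]%fset
  | Some false => [fset Some (p, inr false)]%fset end.
Definition Ep (p : R) (s0 : {fset R}) (k : option bool) : {fset VW} :=
  ([fset (Some (p, inl q) : VW) | q in s0] `|` cset p k)%fset.
Definition WF (T : {fset VW}) : Prop := (T `<=` [fset None])%fset \/
  exists p s0 k, [/\ p \in J, AR r (Q p) s0 & T = Ep p s0 k].

Lemma inJ p : (p \in J) = (p \in P) && (m < p <= m + r).
Proof. by rewrite !inE. Qed.
Lemma inQ p q : (q \in Q p) = (q \in P) && (p + r < q).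
Proof. by rewrite !inE. Qed.

Lemma in_Ep_inl p s0 k p' q :
  ((Some (p', inl q) : VW) \in Ep p s0 k) = (p' == p) && (q \in s0).
Proof.
rewrite /Ep in_fsetU; have -> : ((Some (p', inl q) : VW) \in cset p k) = false.
  by case: k => [[]|] /=; rewrite ?inE //; apply/negbTE/eqP => h; congruence.
rewrite orbF; apply/imfsetP/andP => [[x /= xs [-> ->]]|[/eqP -> qs]] //.
by exists q.
Qed.
Lemma in_Ep_S p s0 k p' :
  ((Some (p', inr false) : VW) \in Ep p s0 k) = (p' == p) && (k == Some false).
Proof.
rewrite /Ep in_fsetU; have -> : ((Some (p', inr false) : VW) \in
   [fset (Some (p, inl q) : VW) | q in s0]%fset) = false.
  by apply/negP => /imfsetP [x _].
case: k => [[]|] /=; rewrite ?inE ?andbT ?andbF //; apply/eqP/eqP => [h|->] //; congruence.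
Qed.
Lemma in_Ep_N p s0 k p' :
  ((Some (p', inr true) : VW) \in Ep p s0 k) = false.
Proof.
rewrite /Ep in_fsetU; have -> : ((Some (p', inr true) : VW) \in
   [fset (Some (p, inl q) : VW) | q in s0]%fset) = false.
  by apply/negP => /imfsetP [x _].
by case: k => [[]|] //=; rewrite ?inE //; apply: neqF => h; congruence.
Qed.
Lemma in_Ep_None p s0 k : ((None : VW) \in Ep p s0 k) = (k == Some true).
Proof.
rewrite /Ep in_fsetU; have -> : ((None : VW) \in
   [fset (Some (p, inl q) : VW) | q in s0]%fset) = false.
  by apply/negP => /imfsetP [x _].
by case: k => [[]|] //=; rewrite ?inE //; apply: neqF => h; congruence.
Qed.

Lemma WCE : WC = WF.
Proof.
apply: funext => T; apply: propext; split.
  case => [h|[i [s [iJ [[s0 [c [ARs0 [hc ->]]]] ->]]]]]; first by left.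
  right.
  have E : forall k, c = [fset (inr k : R + bool)]%fset ->
     [fset (if v == inr true then None else Some (i, v)) | v in
       ([fset (inl x : R + bool) | x in s0] `|` c)%fset]%fset = Ep i s0 (Some k).
    move=> k ->; rewrite imfsetU imfset_fset1 /Ep /=; congr (_ `|` _)%fset.
      by rewrite -imfset_comp; apply: eq_imfset => // x.
    by case: k.
  case: hc => [->|[hc|hc]].
  - exists i, s0, None; split => //; rewrite fsetU0 -imfset_comp /Ep /= fsetU0.
    by apply: eq_imfset => // x.
  - by exists i, s0, (Some true); split => //; rewrite (E true hc).
  - by exists i, s0, (Some false); split => //; rewrite (E false hc).
case => [h|[p [s0 [k [pJ ARs0 ->]]]]]; first by left.
right; exists p.
pose c : {fset R + bool} := match k with None => fset0
  | Some b => [fset (inr b : R + bool)]%fset end.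
exists ([fset (inl x : R + bool) | x in s0] `|` c)%fset; split => //; split.
  exists s0, c; split => //; split => //.
  by case: k @c => [[]|]; auto.
rewrite imfsetU -imfset_comp /Ep /=; congr (_ `|` _)%fset.
  by case: k @c => [[]|] /=; rewrite ?imfset0 ?imfset_fset1.
Qed.
End Inst.


Section Cl.
Context {R : realType} (r : R) (P : {fset R}) (m : R).
Hypotheses (r0 : 0 <= r) (mP : m \in P) (mmin : forall p, p \in P -> m <= p).
Local Notation VW := (@VW R).
Local Notation J := (J r P m).
Local Notation Q := (Q r P).

Lemma eqV1 (x : R * (R + bool)) : ((Some x : VW) == None) = false.
Proof. by apply: neqF. Qed.
Lemma eqV1' (x : R * (R + bool)) : ((None : VW) == Some x) = false.
Proof. by apply: neqF. Qed.
Lemma eqV2 (p q : R) (u v : R + bool) :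
  ((Some (p, u) : VW) == Some (q, v)) = (p == q) && (u == v).
Proof.
apply/eqP/andP => [h|[/eqP -> /eqP ->]] //; split; apply/eqP; congruence.
Qed.
Lemma eqS1 (x y : R) : ((inl x : R + bool) == inl y) = (x == y).
Proof. by apply/eqP/eqP => [h|->] //; congruence. Qed.
Lemma eqS2 (x : R) b : ((inl x : R + bool) == inr b) = false.
Proof. by apply: neqF. Qed.
Lemma eqS3 (x : R) b : ((inr b : R + bool) == inl x) = false.
Proof. by apply: neqF. Qed.
Lemma eqS4 b b' : ((inr b : R + bool) == inr b') = (b == b').
Proof. by apply/eqP/eqP => [h|->] //; congruence. Qed.

Definition eqVs := (eqV1, eqV1', eqV2, eqS1, eqS2, eqS3, eqS4).

Lemma Jfacts p : p \in J -> [/\ p \in P, m < p & p <= m + r].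
Proof. by rewrite inJ => /andP[-> /andP[-> ->]]. Qed.
Lemma Qfacts p q : q \in Q p -> q \in P /\ p + r < q.
Proof. by rewrite inQ => /andP[-> ->]. Qed.

Lemma dist_far p q : p \in J -> q \in P -> q != p -> r < `|q - p| -> p + r < q.
Proof.
move=> /Jfacts [pP mp pm] qP qp; have := mmin _ qP.
by rewrite ltr_normr => mq /orP[h|h]; lra.
Qed.

Lemma AR_sub (T S : {fset R}) S' : AR r T S -> (S' `<=` S)%fset -> AR r T S'.
Proof.
case=> sub pw sS; split; first exact: fsubset_trans sS sub.
by move=> p q pS qS; apply: pw; apply: (fsubsetP sS).
Qed.

Lemma AR_add (T : {fset R}) S c : AR r T S -> c \in T ->
  (forall q, q \in S -> q != c -> r < `|q - c|) -> AR r T (c |` S)%fset.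
Proof.
case=> sub pw cT hc; split.
  by apply/fsubsetP => v; rewrite in_fset1U => /orP[/eqP->|vS] //; apply: (fsubsetP sub).
move=> p q; rewrite !in_fset1U => /orP[/eqP->|pS] /orP[/eqP->|qS]; rewrite ?eqxx //.
- by move=> cq; rewrite distrC; apply: hc => //; rewrite eq_sym.
- by move=> pc; apply: hc.
- exact: pw.
Qed.

Lemma gt_pos a b : a < b -> r < `|b - a| <-> r < b - a.
Proof. by move=> h; rewrite gtr0_norm //; lra. Qed.

Lemma HA1_K : forall S, AR r P S -> forall a a', a \in J -> a' \in J -> a \in S -> a' \in S -> a = a'.
Proof.
move=> S [sub pw] a a' aJ a'J aS a'S; apply/eqP; apply/negPn/negP => ne.
have := pw a a' aS a'S ne; move: aJ a'J => /Jfacts[_ h1 h2] /Jfacts[_ h3 h4].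
by rewrite ltr_normr => /orP[h|h]; lra.
Qed.

Lemma HA2_K : forall S, AR r P S -> forall a, a \in J -> a \in S -> m \notin S.
Proof.
move=> S [sub pw] a aJ aS; apply/negP => mS; move: (aJ) => /Jfacts[_ h1 h2].
have ne : a != m by apply/eqP => e; lra.
by have := pw a m aS mS ne; rewrite ltr_normr => /orP[h|h]; lra.
Qed.

Lemma HC0_K : forall S, AR r P S -> (forall a, a \in J -> a \notin S) -> AR r P (m |` S)%fset.
Proof.
move=> S hS nJ; apply: AR_add => // q qS qm.
case: hS => sub _; have qP := fsubsetP sub q qS.
have mq := mmin _ qP; have mq' : m < q by rewrite lt_def qm mq.
have : q \notin J by apply/negP => qJ; move: (nJ q qJ); rewrite qS.
rewrite inJ qP mq' /= -ltNge => h; rewrite gtr0_norm; lra.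
Qed.

Lemma HCa_K : forall S, AR r P S -> forall a, a \in J -> a \in S -> AR r P (m |` (S `\ a))%fset.
Proof.
move=> S hS a aJ aS; apply: AR_add => //; first by apply: AR_sub hS (fsubsetDl _ _).
move=> q /fsetD1P[qa qS] qm; case: (hS) => sub pw; have qP := fsubsetP sub q qS.
have := @dist_far a q aJ qP qa (pw q a qS aS qa); move: aJ => /Jfacts[_ h1 h2] h.
by rewrite gtr0_norm; lra.
Qed.

Lemma mJ : m \notin J.
Proof. by rewrite inJ ltxx andbF. Qed.


Local Notation AW := (AW r P m).
Local Notation WF := (WF r P m).

Lemma inAW v : v \in AW -> exists p, p \in J /\ v = Some (p, inr false).
Proof. by move/imfsetP => [p pJ ->]; exists p. Qed.
Lemma SinAW p : p \in J -> (Some (p, inr false) : VW) \in AW.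
Proof. by move=> pJ; apply/imfsetP; exists p. Qed.
Lemma NoneAW : (None : VW) \notin AW.
Proof. by apply/negP => /imfsetP [p _]. Qed.

Lemma HA1_W : forall T, WF T -> forall a a', a \in AW -> a' \in AW -> a \in T -> a' \in T -> a = a'.
Proof.
move=> T hT a a' /inAW [p [pJ ->]] /inAW [p' [p'J ->]].
case: hT => [sub|[q [s0 [k [qJ _ ->]]]]].
  by move=> /(fsubsetP sub); rewrite inE eqVs.
by rewrite !in_Ep_S => /andP[/eqP-> _] /andP[/eqP-> _].
Qed.

Lemma HA2_W : forall T, WF T -> forall a, a \in AW -> a \in T -> (None : VW) \notin T.
Proof.
move=> T hT a /inAW [p [pJ ->]].
case: hT => [sub|[q [s0 [k [qJ _ ->]]]]].
  by move=> /(fsubsetP sub); rewrite inE eqVs.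
by rewrite in_Ep_S in_Ep_None => /andP[_ /eqP->].
Qed.

Lemma HC0_W : forall T, WF T -> (forall a, a \in AW -> a \notin T) -> WF (None |` T)%fset.
Proof.
move=> T hT nA; case: hT => [sub|[q [s0 [k [qJ ARs eT]]]]]; last subst T.
  left; apply/fsubsetP => v; rewrite in_fset1U => /orP[/eqP->|/(fsubsetP sub)] //.
  by rewrite inE.
have kS : k != Some false.
  by apply/negP => /eqP kS; have := nA _ (SinAW _ qJ); rewrite in_Ep_S eqxx kS eqxx.
right; exists q, s0, (Some true); split => //.
apply/fsetP => -[[p' [x|[]]]|];
  rewrite in_fset1U ?in_Ep_inl ?in_Ep_S ?in_Ep_N ?in_Ep_None ?eqVs //=.
by rewrite (negbTE kS) andbF.
Qed.

Lemma HCa_W : forall T, WF T -> forall a, a \in AW -> a \in T -> WF (None |` (T `\ a))%fset.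
Proof.
move=> T hT a /inAW [p [pJ ->]].
case: hT => [sub|[q [s0 [k [qJ ARs ->]]]]].
  by move=> /(fsubsetP sub); rewrite inE eqVs.
rewrite in_Ep_S => /andP[/eqP-> /eqP->].
right; exists q, s0, (Some true); split => //.
apply/fsetP => -[[p' [x|[]]]|];
  rewrite in_fset1U ?in_fsetD1 ?in_Ep_inl ?in_Ep_S ?in_Ep_N ?in_Ep_None ?eqVs //=.
all: by rewrite ?andbF /=; case: (p' == q).
Qed.

End Cl.


Section Main.
Context {R : realType} (r : R) (P : {fset R}) (m : R).
Hypotheses (r0 : 0 <= r) (mP : m \in P) (mmin : forall p, p \in P -> m <= p).
Local Notation VW := (@VW R).
Local Notation J := (J r P m).
Local Notation Q := (Q r P).
Local Notation AW := (AW r P m).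
Local Notation WF := (WF r P m).

Definition fK (t : R -> R) : VW -> R := fun v => match v with
 | None => Num.max (- th (Bs J t)) 0
 | Some (p, inr false) => if p \in J then Num.max (2 * t p - 1) 0 else 0
 | Some (_, inr true) => 0
 | Some (p, inl q) => if (p \in J) && (q \in Q p) then t q * phi (t p) else 0 end.
Definition gW (w : VW -> R) : R -> R := fun v =>
  (if v == m then w None else 0) + (if v \in J then w (Some (v, inr false)) else 0)
  + \sum_(p <- J) w (Some (p, inl v)).

Lemma realK_cases (t : R -> R) : realization (R:=R) (AR r P) t ->
  exists S, [/\ AR r P S, (forall v, v \notin S -> t v = 0), (forall v, 0 <= t v),
    \sum_(v <- S) t v = 1 &
    ((forall a, a \in J -> a \notin S) /\ Bs J t = 0 \/
     exists a, [/\ a \in J, a \in S, t m = 0, Bs J t = t a &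
                  forall v, v \in S -> v != a -> v != m /\ v \notin J])].
Proof. exact: (@real_cases R R (AR r P) m J (@HA1_K R r P m) (@HA2_K R r P m)). Qed.

Lemma phi_ge0 (b : R) : 0 <= b -> 0 <= phi b.
Proof.
move=> hb; rewrite /phi; apply: mulr_ge0 => //; rewrite le_min; apply/andP; split => //.
by apply: mulr_ge0.
Qed.

Lemma notQJ (p v : R) : p \in J -> v \in J -> (v \in Q p) = false.
Proof.
move=> /(Jfacts) [_ h1 h2] /(Jfacts) [_ h3 h4]; rewrite inQ.
by apply/negbTE; rewrite negb_and -leNgt; apply/orP; right; lra.
Qed.
Lemma notQm (p : R) : p \in J -> (m \in Q p) = false.
Proof.
move=> /(Jfacts) [_ h1 h2]; rewrite inQ.
by apply/negbTE; rewrite negb_and -leNgt; apply/orP; right; lra.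
Qed.

Lemma E1 (t : R -> R) : realization (R:=R) (AR r P) t -> Hg m J t 0 = gW (fK t).
Proof.
move=> rt; apply: funext => v.
have [S [AS tz t0 t1 cas]] := realK_cases t rt.
have hB : 0 <= Bs J t by case: cas => [[_ ->]|[a [_ _ _ -> _]]].
rewrite /Hg /gW !hhs0 mul0r addr0.
case: (eqVneq v m) => [->|vm].
  rewrite (negbTE (@mJ R r P m)) addr0 big1_fset ?addr0 //.
  by move=> p pJ _ /=; rewrite notQm // andbF.
rewrite add0r; case: (boolP (v \in J)) => vJ.
  rewrite big1_fset ?addr0 /=; first by rewrite vJ th_max0.
  by move=> p pJ _ /=; rewrite notQJ // andbF.
rewrite add0r rhob0 //.
case: cas => [[nA B0]|[a [aJ aS tm Ba hS]]].
  rewrite B0 phi0 mul0r big1_fset // => p pJ _ /=.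
  by rewrite pJ (tz p) ?nA // phi0 mulr0; case: ifP.
rewrite Ba (big_fsetD1 a aJ) /= big1_fset ?addr0; last first.
  move=> p /fsetD1P[pa pJ] _ /=; rewrite pJ (tz p) ?phi0 ?mulr0; first by case: ifP.
  by apply/negP => pS; have [_] := hS p pS pa; rewrite pJ.
rewrite aJ /=; case: ifP => [_|vQ]; first by rewrite mulrC.
rewrite (tz v) ?mulr0 //; apply/negP => vS.
case: AS => sub pw; have vP := fsubsetP sub v vS.
have va : v != a by apply/eqP => e; move: vJ; rewrite e aJ.
have := @dist_far R r P m mmin a v aJ vP va (pw v a vS aS va).
by move=> h; move: vQ; rewrite inQ vP h.
Qed.


Lemma sum_img (p : R) (s0 : {fset R}) (F : VW -> R) :
  \sum_(v <- [fset (Some (p, inl q) : VW) | q in s0]%fset) F v =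
  \sum_(q <- s0) F (Some (p, inl q)).
Proof.
rewrite big_imfset //= => x y _ _ h; congruence.
Qed.

Lemma sum_Ep (p : R) (s0 : {fset R}) k (F : VW -> R) :
  \sum_(v <- Ep p s0 k) F v =
  \sum_(q <- s0) F (Some (p, inl q)) + \sum_(v <- cset p k) F v.
Proof.
rewrite /Ep; case: k => [b|] /=; last by rewrite fsetU0 sum_img big_seq_fset0 addr0.
by case: b; rewrite fsetUC big_fsetU1 /= ?sum_img ?big_seq_fset1 1?addrC //;
  apply/negP => /imfsetP [q _].
Qed.


Lemma fK_ge0 (t : R -> R) : (forall v, 0 <= t v) -> forall v, 0 <= fK t v.
Proof.
move=> t0 [[p [q|[]]]|] /=; rewrite ?le_max ?lexx ?orbT //.
- by case: ifP => // _; apply: mulr_ge0 => //; apply: phi_ge0.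
- by case: ifP => // _; rewrite le_max lexx orbT.
Qed.

Lemma M1 (t : R -> R) : realization (R:=R) (AR r P) t -> realization (R:=R) WF (fK t).
Proof.
move=> rt; have [S [AS tz t0 t1 cas]] := realK_cases t rt.
have f0 := fK_ge0 t t0.
case: cas => [[nA B0]|[a [aJ aS tm Ba hS]]].
  exists [fset None]%fset; split; first by left; exact: fsubset_refl.
  split; last split => //; last by rewrite big_seq_fset1 /= B0 th0 opprK; apply/max_idPl; lra.
  move=> [[p [q|[]]]|]; rewrite inE ?eqVs // => _ /=.
    case: (boolP (p \in J)) => pJ //=; rewrite (tz p) ?nA // phi0 mulr0.
    by case: ifP.
  case: (boolP (p \in J)) => pJ //; rewrite (tz p) ?nA //; apply/max_idPr; lra.
have hb : 0 <= t a <= 1 by rewrite t0 (le1_of_sum _ _ _ t0 t1 aS).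
have sr : \sum_(v <- (S `\ a)%fset) t v = 1 - t a.
  by move: t1; rewrite (big_fsetD1 a) //=; lra.
have tS : forall p, p \in J -> p != a -> t p = 0.
  move=> p pJ pa; apply: tz; apply/negP => pS.
  by have [_] := hS p pS pa; rewrite pJ.
case: (AS) => sub pw.
have s0Q : forall q, q \in (S `\ a)%fset -> q \in Q a.
  move=> q /fsetD1P[qa qS]; have qP := fsubsetP sub q qS.
  rewrite inQ qP; exact: (@dist_far R r P m mmin a q aJ qP qa (pw q a qS aS qa)).
have ARs0 : AR r (Q a) (S `\ a)%fset.
  split; first by apply/fsubsetP => q; apply: s0Q.
  by move=> p q /fsetD1P[_ pS] /fsetD1P[_ qS]; apply: pw.
have tq : forall q, q \notin (S `\ a)%fset -> q \in Q a -> t q = 0.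
  move=> q qs qQ; apply: tz; apply/negP => qS; move: qs; rewrite in_fsetD1 qS andbT negbK.
  move/eqP => e; move: qQ; rewrite inQ e => /andP[_]. by rewrite ltNge lerDl r0.
pose k := if 2^-1 <= t a then Some false else Some true.
exists (Ep a (S `\ a)%fset k); split.
  by right; exists a, (S `\ a)%fset, k; split.
split; last split => //.
  move=> [[p [q|[]]]|]; rewrite ?in_Ep_inl ?in_Ep_S ?in_Ep_N ?in_Ep_None //= => hn.
  - case: (eqVneq p a) hn => [-> /= qs|pa _].
      by rewrite aJ /=; case: ifP => // qQ; rewrite (tq q qs qQ) mul0r.
    by case: (boolP (p \in J)) => pJ //=; rewrite (tS p pJ pa) phi0 mulr0; case: ifP.
  - case: (eqVneq p a) hn => [-> /= kS|pa _].
      rewrite aJ; apply/max_idPr; move: kS; rewrite /k; case: ifP => //; lra.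
    by case: (boolP (p \in J)) => pJ //; rewrite (tS p pJ pa); apply/max_idPr; lra.
  - rewrite Ba; apply/max_idPr; move: hn; rewrite /k; case: ifP => // h _.
    by rewrite th_hi //; lra.
rewrite sum_Ep.
rewrite (@eq_fsum _ _ _ _ (fun q => t q * phi (t a))); last first.
  by move=> q qs /=; rewrite aJ s0Q.
rewrite -mulr_suml sr /k; case: ifP => h /=; rewrite big_seq_fset1 /=.
  rewrite aJ (max_idPl _); last lra.
  rewrite /phi (min_idPr _); last lra.
  lra.
rewrite Ba th_lo; last by apply/andP; split; [case/andP: hb|lra].
rewrite (max_idPl _); last by have := sqr_ge0 (1 - 2 * t a); rewrite expr2; lra.
rewrite /phi (min_idPl _); last lra.
ring.
Qed.

Lemma QJ (p q : R) : p \in J -> q \in Q p -> [/\ q != m, q \notin J, q != p & q \in P].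
Proof.
move=> /Jfacts[pP h1 h2] /Qfacts[qP h3]; split => //.
- by apply/eqP => e; lra.
- by rewrite inJ qP /= negb_and -!ltNge; apply/orP; right; lra.
- by apply/eqP => e; lra.
Qed.

Lemma inAW_S (p : R) : ((Some (p, inr false) : VW) \in AW) = (p \in J).
Proof.
apply/imfsetP/idP => [[p' p'J h]|pJ]; last by exists p.
by have -> : p = p' by congruence.
Qed.
Lemma inAW_N (p : R) : ((Some (p, inr true) : VW) \in AW) = false.
Proof. by apply/negP => /imfsetP [p' _ h]. Qed.
Lemma inAW_l (p q : R) : ((Some (p, inl q) : VW) \in AW) = false.
Proof. by apply/negP => /imfsetP [p' _ h]. Qed.

Lemma BsAW (w : VW -> R) : Bs AW w = \sum_(p <- J) w (Some (p, inr false)).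
Proof. by rewrite /Bs big_imfset //= => x y _ _ h; congruence. Qed.

Lemma W_facts (w : VW -> R) : realization (R:=R) WF w ->
  [/\ (forall p, w (Some (p, inr true)) = 0),
      (forall p x, w (Some (p, x)) != 0 -> p \in J),
      (forall p q, w (Some (p, inl q)) != 0 -> q \in Q p) &
      (forall p x p' x', w (Some (p, x)) != 0 -> w (Some (p', x')) != 0 -> p = p')].
Proof.
case=> T [hT [tz _]].
have inT : forall v, w v != 0 -> v \in T.
  by move=> v; apply: contraR => /tz ->; rewrite eqxx.
case: hT => [sub|[p0 [s0 [k [p0J [s0sub _] eT]]]]].
  have nS : forall p x, w (Some (p, x)) = 0.
    move=> p x; apply/eqP; apply: contraT => /inT /(fsubsetP sub).
    by rewrite inE eqVs.
  by split => [p|p x|p q|p x p' x']; rewrite ?nS ?eqxx.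
subst T.
have hp : forall p x, w (Some (p, x)) != 0 -> p = p0.
  move=> p [q|[]] /inT; rewrite ?in_Ep_inl ?in_Ep_S ?in_Ep_N //.
  - by case/andP => /eqP.
  - by case/andP => /eqP.
split.
- by move=> p; apply: tz; rewrite in_Ep_N.
- by move=> p x /hp ->.
- move=> p q /[dup] /hp e /inT; rewrite in_Ep_inl e eqxx /= => qs.
  exact: (fsubsetP s0sub).
- by move=> p x p' x' /hp -> /hp ->.
Qed.

Section WW.
Variable w : VW -> R.
Hypothesis rw : realization (R:=R) WF w.

Lemma sum_copy p x y : w (Some (p, x)) != 0 ->
  \sum_(p' <- J) w (Some (p', y)) = w (Some (p, y)).
Proof.
have [W1 W2 W3 W4] := W_facts w rw.
move=> h; have pJ := W2 _ _ h.
rewrite (big_fsetD1 p pJ) /= big1_fset ?addr0 // => p' /fsetD1P[p'p _] _.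
apply/eqP; apply: contraT => h'; move: p'p; rewrite (W4 _ _ _ _ h' h) eqxx //.
Qed.

Lemma gWm : gW w m = w None.
Proof.
have [W1 W2 W3 W4] := W_facts w rw.
rewrite /gW eqxx (negbTE (@mJ R r P m)) addr0 big1_fset ?addr0 // => p pJ _.
apply/eqP; apply: contraT => h; have := W3 _ _ h; rewrite notQm //.
Qed.

Lemma gWJ p : p \in J -> gW w p = w (Some (p, inr false)).
Proof.
have [W1 W2 W3 W4] := W_facts w rw.
move=> pJ; have pm : p != m by apply/eqP => e; move: pJ; rewrite e (negbTE (@mJ R r P m)).
rewrite /gW (negbTE pm) pJ add0r big1_fset ?addr0 // => p' p'J _.
apply/eqP; apply: contraT => h; have := W3 _ _ h; rewrite notQJ //.
Qed.

Lemma gWo v : v != m -> v \notin J -> gW w v = \sum_(p <- J) w (Some (p, inl v)).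
Proof. by move=> vm vJ; rewrite /gW (negbTE vm) (negbTE vJ) !add0r. Qed.

Lemma Bs_gW : Bs J (gW w) = Bs AW w.
Proof. by rewrite BsAW /Bs; apply: eq_fsum => p pJ; rewrite gWJ. Qed.

End WW.

Lemma E2 (w : VW -> R) : realization (R:=R) WF w -> Hg None AW w 0 = fK (gW w).
Proof.
move=> rw; have [W1 W2 W3 W4] := W_facts w rw.
have w0 : forall v, 0 <= w v by case: rw => T [_ [_ [h _]]].
have hB : 0 <= Bs AW w by apply: sumr_ge0.
apply: funext => v; rewrite /Hg !hhs0 mul0r addr0.
case: v => [[p [q|[]]]|] /=; last by rewrite (Bs_gW w rw).
- rewrite inAW_l rhob0 //.
  case: (eqVneq (w (Some (p, inl q))) 0) => [h0|h].
    rewrite h0 mulr0; case: ifP => // /andP[pJ qQ].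
    have [qm qJ _ _] := @QJ p q pJ qQ.
    rewrite (gWo w) // (gWJ w rw) //.
    case: (eqVneq (w (Some (p, inr false))) 0) => [->|h2]; first by rewrite phi0 mulr0.
    by rewrite (@sum_copy w rw _ _ _ h2) h0 mul0r.
  have pJ := W2 _ _ h; have qQ := W3 _ _ h.
  have [qm qJ _ _] := @QJ p q pJ qQ.
  rewrite pJ qQ /= (gWo w) // (gWJ w rw) // (@sum_copy w rw _ _ _ h) BsAW (@sum_copy w rw _ _ _ h).
  by rewrite mulrC.
- by rewrite inAW_N W1 mulr0.
- rewrite inAW_S; case: (boolP (p \in J)) => pJ; first by rewrite th_max0 (gWJ w rw).
  have -> : w (Some (p, inr false)) = 0; last by rewrite mulr0.
  by apply/eqP; apply: contraT => h; move: pJ; rewrite (W2 _ _ h).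
Qed.

Lemma AR_mono (T T' s : {fset R}) : (T `<=` T')%fset -> AR r T s -> AR r T' s.
Proof. by move=> hT [h1 h2]; split => //; exact: fsubset_trans hT. Qed.

Lemma gW_ge0 (w : VW -> R) : (forall v, 0 <= w v) -> forall v, 0 <= gW w v.
Proof.
move=> w0 v; rewrite /gW; apply: addr_ge0; first apply: addr_ge0.
- by case: ifP.
- by case: ifP.
- by apply: sumr_ge0.
Qed.

Lemma M2 (w : VW -> R) : realization (R:=R) WF w -> realization (R:=R) (AR r P) (gW w).
Proof.
move=> rw; have [W1 W2 W3 W4] := W_facts w rw.
case: (rw) => T [hT [tz [w0 w1]]].
have g0 := gW_ge0 w w0.
case: hT => [sub|[p0 [s0 [k [p0J ARs eT]]]]].
  have nS : forall p x, w (Some (p, x)) = 0.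
    move=> p x; apply: tz; apply/negP => /(fsubsetP sub).
    by rewrite inE eqVs.
  have wN : w None = 1.
    move: w1; rewrite (big_fset_incl _ sub) ?big_seq_fset1 // => x _; exact: tz.
  exists [fset m]%fset; split.
    split; first by apply/fsubsetP => v; rewrite inE => /eqP ->.
    by move=> p q; rewrite !inE => /eqP -> /eqP ->; rewrite eqxx.
  split.
    move=> v; rewrite inE => vm; rewrite /gW (negbTE vm) add0r nS big1_fset ?addr0.
      by case: ifP.
    by move=> *; rewrite nS.
  by split => //; rewrite big_seq_fset1 (gWm w rw).
subst T.
case: (ARs) => s0Q _.
have hs0 : forall q, q \in s0 -> p0 + r < q /\ q \in P.
  by move=> q qs; have /Qfacts [] := fsubsetP s0Q q qs.
have [p0P h1 h2] := @Jfacts R r P m p0 p0J.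
have p0s0 : p0 \notin s0 by apply/negP => /hs0 [h _]; lra.
have ms0 : m \notin s0 by apply/negP => /hs0 [h _]; lra.
have p0m : p0 != m by apply/eqP => e; lra.
have gWf : forall v, gW w v = (if v == m then w None else 0) +
    (if v == p0 then w (Some (p0, inr false)) else 0) +
    (if v \in s0 then w (Some (p0, inl v)) else 0).
  move=> v; rewrite /gW; congr (_ + _ + _).
    case: (eqVneq v p0) => [->|vp]; first by rewrite p0J.
    case: ifP => // vJ; apply: tz; rewrite in_Ep_S (negbTE vp) //.
  rewrite (big_fsetD1 p0 p0J) /= big1_fset ?addr0.
    by case: ifP => // vs; apply: tz; rewrite in_Ep_inl eqxx vs.
  by move=> p /fsetD1P[pp _] _; apply: tz; rewrite in_Ep_inl (negbTE pp).
have sumT := w1; rewrite sum_Ep in sumT.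
have ARsP : AR r P s0.
  apply: (@AR_mono (Q p0) P s0 _ ARs); apply/fsubsetP => q /Qfacts []; done.
have gq : forall q, q \in s0 -> gW w q = w (Some (p0, inl q)).
  move=> q qs; rewrite gWf qs; have [h _] := hs0 q qs.
  have -> : (q == m) = false by apply/negbTE/eqP => e; lra.
  have -> : (q == p0) = false by apply/negbTE/eqP => e; lra.
  by rewrite !add0r.
have sq : \sum_(q <- s0) gW w q = \sum_(q <- s0) w (Some (p0, inl q)).
  by apply: eq_fsum.
case: (eqVneq k (Some false)) => [ek|nk].
  subst k; rewrite /= big_seq_fset1 in sumT.
  exists (p0 |` s0)%fset; split.
    apply: (@AR_add R r P) => //.
    by move=> q /hs0 [h _] _; rewrite gtr0_norm; lra.
  split.
    move=> v; rewrite in_fset1U negb_or => /andP[vp vs].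
    rewrite gWf (negbTE vp) (negbTE vs) addr0.
    by case: ifP => _; rewrite ?addr0 //; apply: tz; rewrite in_Ep_None.
  split => //; rewrite big_fsetU1 //= sq gWf eqxx (negbTE p0m) (negbTE p0s0) add0r addr0.
  by rewrite addrC.
have wS : w (Some (p0, inr false)) = 0 by apply: tz; rewrite in_Ep_S eqxx /= (negbTE nk).
have cN : \sum_(v <- cset p0 k) w v = w None.
  case: k nk {sumT w1 sq gq gWf} tz => [[]|] //= _ tz; first by rewrite big_seq_fset1.
  by rewrite big_seq_fset0 tz // in_Ep_None.
exists (m |` s0)%fset; split.
  apply: (@AR_add R r P) => //.
  by move=> q /hs0 [h _] _; rewrite gtr0_norm; lra.
split.
  move=> v; rewrite in_fset1U negb_or => /andP[vm vs].
  by rewrite gWf (negbTE vm) (negbTE vs) add0r addr0; case: ifP.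
split => //; rewrite big_fsetU1 //= sq gWf eqxx eq_sym (negbTE p0m) (negbTE ms0) !addr0.
by rewrite -cN addrC.
Qed.

End Main.


Section Cont.
Context {R : realType} (r : R) (P : {fset R}) (m : R).
Local Notation VW := (@VW R).

Lemma ct_phi {T : topologicalType} (f : T -> R) : ct f -> ct (fun x => phi (f x)).
Proof.
move=> h; rewrite /phi; apply: ct_mul; first exact: ct_cst.
by apply: ct_min; [apply: ct_mul => //; apply: ct_cst|apply: ct_cst].
Qed.

Lemma fK_cont : continuous (fun t : {ptws R -> R} => (fK r P m t : {ptws VW -> R})).
Proof.
apply: ct_ptws => -[[p [q|[]]]|]; rewrite /fK /=.
- case: ((p \in J r P m) && (q \in Q r P p)); last exact: ct_cst.
  by apply: ct_mul; [exact: ct_proj|apply: ct_phi; exact: ct_proj].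
- exact: ct_cst.
- case: (p \in J r P m); last exact: ct_cst.
  apply: ct_max; last exact: ct_cst.
  apply: ct_add; last exact: ct_cst.
  by apply: ct_mul; [exact: ct_cst|exact: ct_proj].
- apply: ct_max; last exact: ct_cst.
  apply: ct_opp; apply: ct_th; rewrite /Bs.
  exact: (@ct_sum R {ptws R -> R} R (J r P m) (fun a t => t a) (fun a => ct_proj a)).
Qed.

Lemma gW_cont : continuous (fun w : {ptws VW -> R} => (gW r P m w : {ptws R -> R})).
Proof.
apply: ct_ptws => v; rewrite /gW.
apply: ct_add; first apply: ct_add.
- by case: (v == m); [exact: ct_proj|exact: ct_cst].
- by case: (v \in J r P m); [exact: ct_proj|exact: ct_cst].
- exact: (@ct_sum R {ptws VW -> R} R (J r P m) (fun a t => t (Some (a, inl v)))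
           (fun a => ct_proj _)).
Qed.
End Cont.

Theorem proposition4p2 (R : realType) (r : R) (P : {fset R}) (m : R) :
  0 <= r -> m \in P -> (forall p, p \in P -> m <= p) ->
  homotopy_equiv R (realization (R := R) (AR r P))
    (realization (R := R)
       (wedge [fset p in P | (m < p <= m + r)%R]%fset (inr true)
          (fun p => susp (AR r [fset q in P | (p + r < q)%R]%fset)))).
Proof.
move=> r0 mP mmin.
change (homotopy_equiv R (realization (R := R) (AR r P)) (realization (R := R) (WC r P m))).
rewrite WCE.
exists (fun t : {ptws R -> R} => (fK r P m t : {ptws VW -> R})).
exists (fun w : {ptws VW -> R} => (gW r P m w : {ptws R -> R})).
split; first exact: continuous_subspaceT (fK_cont r P m).
split; first exact: continuous_subspaceT (gW_cont r P m).
split; first by move=> t; apply: M1.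
split; first by move=> w; apply: M2.
split.
  exists (fun p : {ptws R -> R} * R => (Hg m (J r P m) p.1 p.2 : {ptws R -> R})).
  split; first exact: continuous_subspaceT (Hg_cont _ _).
  split.
    move=> t s ht hs; apply: Hg_real => //.
    - exact: mJ.
    - exact: HA1_K.
    - exact: HA2_K.
    - exact: HC0_K.
    - exact: HCa_K.
  move=> t ht; split; first exact: E1.
  apply: Hg1 ht.
  - exact: HA1_K.
  - exact: HA2_K.
exists (fun p : {ptws VW -> R} * R => (Hg None (AW r P m) p.1 p.2 : {ptws VW -> R})).
split; first exact: continuous_subspaceT (Hg_cont _ _).
split.
  move=> w s hw hs; apply: Hg_real => //.
  - exact: NoneAW.
  - exact: HA1_W.
  - exact: HA2_W.
  - exact: HC0_W.
  - exact: HCa_W.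
move=> w hw; split; first exact: E2.
apply: Hg1 hw.
- exact: HA1_W.
- exact: HA2_W.
Qed.
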